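(* For every integer $l\ge 0$, the ideal $I_l\subset\mathbb{Z}[q,q^{-1}]$ is principal; it equals $g_l\,\mathbb{Z}[q,q^{-1}]$, where $g_l=\mathrm{GCD}(f_{l,0},\dots,f_{l,l})$. Moreover, up to a unit of $\mathbb{Z}[q,q^{-1}]$, $$g_l=\prod_{m\ge 1}\Phi_m^{t_{l,m}},\qquad t_{l,m}=\begin{cases}\lfloor \tfrac{l+1}{m}\rfloor-1 & \text{for } 1\le m\le l,\\ 0 & \text{for } m>l.\end{cases}$$
   Context: Work in the ring $\mathbb{Z}[q,q^{-1}]$ of Laurent polynomials, a unique factorization domain whose units are $\pm q^j$. For $i\in\mathbb{Z}$ and $n\ge 0$ set $\{i\}_q=q^i-1$, $\{i\}_{q,n}=\{i\}_q\{i-1\}_q\cdots\{i-n+1\}_q$ (the empty product, equal to $1$, when $n=0$), and $\{n\}_q!=\{n\}_{q,n}$ (so $\{0\}_q!=1$). For $0\le k\le l$ set $f_{l,k}=\{l-k\}_q!\,\{k\}_q!$, and let $I_l$ be the ideal of $\mathbb{Z}[q,q^{-1}]$ generated by $f_{l,0},\dots,f_{l,l}$. $\mathrm{GCD}$ denotes a greatest common divisor in $\mathbb{Z}[q,q^{-1}]$ (defined up to units). $\Phi_m=\prod_{d\mid m}(q^d-1)^{\mu(m/d)}$ is the $m$th cyclotomic polynomial ($\mu$ the Möbius function), and $\lfloor r\rfloor$ is the largest integer $\le r$. *)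

(* Defs.v *)
(* Z[q,q^{-1}] is modelled as the subring of the fraction
   field  {fraction {poly int}}  consisting of elements  p(q) / q^n. *)
From HB Require Import structures.
From mathcomp Require Import all_boot all_order all_algebra all_field.
Set Implicit Arguments. Unset Strict Implicit. Unset Printing Implicit Defensive.
Import Order.TTheory GRing.Theory Num.Theory.
Local Open Scope ring_scope.

Definition Fq := {fraction {poly int}}.

Definition qv : Fq := tofrac (('X : {poly int})).

Definition laurent (x : Fq) : Prop :=
  exists (p : {poly int}) (n : nat), x = tofrac p / qv ^+ n.

Definition qbr (i : int) : Fq := qv ^ i - 1.
Definition qbrn (i : int) (n : nat) : Fq := \prod_(j < n) qbr (i - j%:Z).
Definition qfact (n : nat) : Fq := qbrn n%:Z n.
Definition f (l k : nat) : Fq := qfact (l - k) * qfact k.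

Definition ldvd (a b : Fq) : Prop := exists c, laurent c /\ b = a * c.

Definition in_I (l : nat) (x : Fq) : Prop :=
  exists c : nat -> Fq, (forall k, laurent (c k)) /\
    x = \sum_(k < l.+1) c k * f l k.

Definition is_gcd_f (l : nat) (g : Fq) : Prop :=
  laurent g /\ (forall k, (k <= l)%N -> ldvd g (f l k)) /\
  (forall d, laurent d -> (forall k, (k <= l)%N -> ldvd d (f l k)) -> ldvd d g).

Definition assoc (a b : Fq) : Prop :=
  exists u v, [/\ laurent u, laurent v, u * v = 1 & a = u * b].

Definition t (l m : nat) : nat :=
  if (1 <= m <= l)%N then ((l.+1) %/ m - 1)%N else 0%N.

(* prod_{m>=1} Phi_m^{t_{l,m}}  (factors with m > l are 1) *)
Definition Pl (l : nat) : Fq :=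
  \prod_(1 <= m < l.+1) (tofrac ('Phi_m : {poly int})) ^+ t l m.

(* Main.v *)
Require Import Defs.
From HB Require Import structures.
From mathcomp Require Import all_boot all_order all_algebra all_field.
From mathcomp Require Import zify ring.
Set Implicit Arguments. Unset Strict Implicit. Unset Printing Implicit Defensive.
Import Order.TTheory GRing.Theory Num.Theory.
Local Open Scope ring_scope.

Definition br (n : nat) : {poly int} := 'X^n - 1.
Definition Phi (m : nat) : {poly int} := 'Phi_m.
Definition Pe (B : nat) (e : nat -> nat) : {poly int} :=
  \prod_(1 <= m < B) Phi m ^+ e m.

Lemma Phi_neq0 m : Phi m != 0.
Proof. by apply: monic_neq0; apply: Cyclotomic_monic. Qed.

Lemma Pe_neq0 B e : Pe B e != 0.
Proof. by rewrite /Pe prodf_seq_neq0; apply/allP => i _; rewrite /= expf_neq0 // Phi_neq0. Qed.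

Lemma Pe_mul B e1 e2 : Pe B e1 * Pe B e2 = Pe B (fun k => (e1 k + e2 k)%N).
Proof. by rewrite /Pe -big_split /=; apply: eq_bigr => i _; rewrite exprD. Qed.

Lemma eq_Pe B e1 e2 : (forall k, (1 <= k < B)%N -> e1 k = e2 k) -> Pe B e1 = Pe B e2.
Proof. by move=> H; apply: eq_big_nat => i /H ->. Qed.

Lemma Pe_split B e e1 : (forall k, (1 <= k < B)%N -> e1 k <= e k)%N ->
  Pe B e = Pe B e1 * Pe B (fun k => e k - e1 k)%N.
Proof. by move=> H; rewrite Pe_mul; apply: eq_Pe => k /H Hk; rewrite subnKC. Qed.

Lemma Pe0 B : Pe B (fun _ => 0%N) = 1.
Proof. by rewrite /Pe; apply: big1 => i _; rewrite expr0. Qed.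

Lemma Pe_recr B e : Pe B.+2 e = Pe B.+1 e * Phi B.+1 ^+ e B.+1.
Proof. by rewrite /Pe big_nat_recr. Qed.

Lemma Pe_br B n : (0 < n < B)%N -> br n = Pe B (fun k => k %| n)%N.
Proof.
case/andP=> n0 nB; rewrite /br -prod_Cyclotomic // /Pe.
rewrite [RHS](eq_bigr (fun k => if (k %| n)%N then Phi k else 1)); last first.
  by move=> i _; case: (i %| n)%N; rewrite ?expr1 ?expr0.
rewrite -big_mkcond -[RHS]big_filter /Phi; apply: perm_big.
apply: uniq_perm; first exact: divisors_uniq.
  by rewrite filter_uniq // iota_uniq.
move=> k; rewrite mem_filter mem_index_iota -dvdn_divisors //.
case kn: (k %| n)%N => //=.
have k0 : (0 < k)%N by apply: dvdn_gt0 n0 kn.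
by rewrite k0 (leq_ltn_trans (dvdn_leq n0 kn) nB).
Qed.

Lemma Pe_Phi B m : (0 < m < B)%N -> Phi m = Pe B (fun k => k == m)%N.
Proof.
case/andP=> m0 mB; rewrite /Pe (bigD1_seq m) ?mem_index_iota ?m0 ?iota_uniq //=.
rewrite eqxx expr1 big1 ?mulr1 // => i /negPf ->; exact: expr0.
Qed.

Lemma br_neq0 n : (0 < n)%N -> br n != 0.
Proof. by move=> n0; rewrite (@Pe_br n.+1 n) ?n0 ?ltnSn // Pe_neq0. Qed.

Definition pfact (n : nat) : {poly int} := \prod_(1 <= i < n.+1) br i.

Lemma pfact_Pe B n : (n < B)%N -> pfact n = Pe B (fun k => n %/ k)%N.
Proof.
elim: n => [|n IH] nB.
  rewrite /pfact big_geq // -(Pe0 B); apply: eq_Pe => k _; by rewrite div0n.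
rewrite /pfact big_nat_recr //= -/(pfact n) IH ?(ltnW nB) // (@Pe_br B) ?nB //.
rewrite Pe_mul; apply: eq_Pe => k /andP[k0 _]; by rewrite (divnS _ k0) addnC.
Qed.
Definition cop (a b : {poly int}) := exists u v, u * a + v * b = 1.

Lemma br_euclid a b : exists u v, br (gcdn a b) = u * br a + v * br b.
Proof.
move: {2}(a + b)%N (leqnn (a + b)%N) => s; elim: s a b => [|s IH] a b Hs.
  have -> : a = 0%N by lia. have -> : b = 0%N by lia.
  by exists 1, 0; rewrite gcdn0 /br expr0 subrr !mulr0 addr0.
have [a0|a0] := posnP a.
  by rewrite a0 gcd0n; exists 0, 1; rewrite mul0r mul1r add0r.
have [b0|b0] := posnP b.
  by rewrite b0 gcdn0; exists 1, 0; rewrite mul0r mul1r addr0.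
have [ba|ab] := leqP b a.
  have [u [v E]] := IH (a - b)%N b ltac:(lia).
  have -> : gcdn a b = gcdn (a - b) b.
    by rewrite gcdnC -{1}(subnK ba) gcdnDr gcdnC.
  exists u, (v - u * 'X^(a - b)); rewrite E /br.
  have -> : ('X^a : {poly int}) = 'X^(a - b) * 'X^b by rewrite -exprD subnK.
  ring.
have [u [v E]] := IH a (b - a)%N ltac:(lia).
have -> : gcdn a b = gcdn a (b - a).
  by rewrite -{1}(subnK (ltnW ab)) gcdnDr.
exists (u - v * 'X^(b - a)), v; rewrite E /br.
have -> : ('X^b : {poly int}) = 'X^(b - a) * 'X^a by rewrite -exprD subnK // ltnW.
ring.
Qed.

Lemma geom_sum g i :
  br g * \sum_(j < i) 'X^(g * j) = br (g * i).
Proof.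
elim: i => [|i IH]; first by rewrite big_ord0 muln0 mulr0 /br expr0 subrr.
rewrite big_ord_recr /= mulrDr IH /br mulnS exprD.
ring.
Qed.

Lemma Phi_dvd_geom g d : (0 < g)%N -> (1 < d)%N ->
  exists w, \sum_(i < d) 'X^(g * i) = Phi (g * d) * w.
Proof.
move=> g0 d1; set m := (g * d)%N.
have m0 : (0 < m)%N by rewrite muln_gt0 g0 ltnW.
have gm : (g < m)%N by rewrite /m -{1}(muln1 g) ltn_pmul2l.
have gdm : (g %| m)%N by rewrite dvdn_mulr.
set B := m.+1.
have Hbm : br m = br g * (Phi m * Pe B (fun k => (k %| m) - (k %| g) - (k == m))%N).
  rewrite (@Pe_br B m) ?m0 ?ltnSn // (@Pe_br B g) ?g0 ?(ltn_trans gm (ltnSn m)) //.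
  rewrite (@Pe_split B _ (fun k => k %| g)%N); last first.
    by move=> k _; case kg: (k %| g)%N => //=; rewrite (dvdn_trans kg gdm).
  congr (_ * _); rewrite (@Pe_split B _ (fun k => k == m)%N); last first.
    move=> k /andP[k0 _]; case: eqP => // ->.
    have /negPf -> : ~~ (m %| g)%N by apply/negP => /(dvdn_leq g0); lia.
    by rewrite dvdnn.
  by rewrite -(@Pe_Phi B m) ?m0 ?ltnSn //.
exists (Pe B (fun k => (k %| m) - (k %| g) - (k == m))%N).
apply: (mulfI (br_neq0 g0)); rewrite geom_sum -Hbm //.
Qed.

Lemma Phi_dvd_br n : (0 < n)%N -> exists w, br n = Phi n * w.
Proof.
move=> n0; rewrite (@Pe_br n.+1 n) ?n0 ?ltnSn // (@Pe_split n.+1 (fun k => k %| n)%N (fun k => k == n)%N).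
  by rewrite -(@Pe_Phi n.+1 n) ?n0 ?ltnSn //; eexists.
move=> k _; case: eqP => // ->; by rewrite dvdnn.
Qed.

Lemma geom_sub g d : exists B, \sum_(i < d) ('X^(g * i) : {poly int}) = d%:R + br g * B.
Proof.
elim: d => [|d [B IH]]; first by exists 0; rewrite big_ord0 mulr0 addr0.
exists (B + \sum_(j < d) 'X^(g * j)).
rewrite [in LHS]big_ord_recr /= [in LHS]IH mulrDr (geom_sum g d) /br mulrSr; ring.
Qed.

Lemma key_in m n : (0 < m)%N -> (0 < n)%N -> (1 < m %/ gcdn m n)%N ->
  exists u v, ((m %/ gcdn m n)%:R : {poly int}) = u * Phi m + v * Phi n.
Proof.
move=> m0 n0 d1; set g := gcdn m n; set d := (m %/ g)%N.
have g0 : (0 < g)%N by rewrite gcdn_gt0 m0.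
have mgd : m = (g * d)%N by rewrite mulnC divnK // dvdn_gcdl.
have [w Hw] := Phi_dvd_geom g0 d1.
have [B HB] := geom_sub g d.
have [u [v E]] := br_euclid m n.
have [wm Hm] := Phi_dvd_br m0.
have [wn Hn] := Phi_dvd_br n0.
exists (w - B * u * wm), (- (B * v * wn)).
have : (d%:R : {poly int}) = \sum_(i < d) 'X^(g * i) - br g * B by rewrite HB; ring.
rewrite -/g in E; rewrite -mgd in Hw.
by move=> ->; rewrite Hw E Hm Hn; ring.
Qed.

Lemma cop_Phi m n : (0 < m < n)%N -> ~~ (m %| n)%N -> cop (Phi n) (Phi m).
Proof.
case/andP=> m0 mn nd; have n0 : (0 < n)%N by apply: ltn_trans mn.
set g := gcdn m n.
have g0 : (0 < g)%N by rewrite gcdn_gt0 m0.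
have mgd : m = (g * (m %/ g))%N by rewrite mulnC divnK // dvdn_gcdl.
have ngd : n = (g * (n %/ g))%N by rewrite mulnC divnK // dvdn_gcdr.
have d1 : (1 < m %/ g)%N.
  case: (m %/ g)%N mgd => [|[|d]] E //; first by lia.
  by move: nd; rewrite E muln1 dvdn_gcdr.
have e1 : (1 < n %/ g)%N.
  have : (g <= m)%N by apply: dvdn_leq m0 (dvdn_gcdl m n).
  case: (n %/ g)%N ngd => [|[|d]] E //; lia.
have [u1 [v1 E1]] := key_in m0 n0 d1.
have [u2 [v2 E2]] := key_in n0 m0 (ltac:(rewrite gcdnC; exact: e1)).
rewrite gcdnC -/g in E2.
have cde : coprime (m %/ g) (n %/ g).
  by rewrite /coprime -(eqn_pmul2l g0) muln1 muln_gcdr -mgd -ngd.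
have [x [y Exy]] := Bezoutz (m %/ g)%N (n %/ g)%N.
have : gcdz (m %/ g)%N (n %/ g)%N = 1 by rewrite /gcdz /=; apply/eqP; rewrite eqz_nat.
move=> H1; rewrite H1 in Exy.
exists (x%:~R * v1 + y%:~R * u2), (x%:~R * u1 + y%:~R * v2).
have : ((x * (m %/ g)%N + y * (n %/ g)%N)%:~R : {poly int}) = 1 by rewrite Exy.
rewrite rmorphD !rmorphM /= -/g in E1 *; rewrite -!pmulrn E1 E2 => H; apply: etrans H; ring.
Qed.

Lemma cop_mul x a b : cop x a -> cop x b -> cop x (a * b).
Proof.
move=> [u [v E]] [u' [v' E']]; exists (u * u' * x + u * v' * b + v * a * u'), (v * v').
have : (u * x + v * a) * (u' * x + v' * b) = 1 by rewrite E E' mulr1.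
by move=> H; apply: etrans H; ring.
Qed.

Lemma cop1 x : cop x 1.
Proof. by exists 0, 1; rewrite mul0r add0r mulr1. Qed.

Lemma cop_exp x a n : cop x a -> cop x (a ^+ n).
Proof. move=> H; elim: n => [|n IH]; [exact: cop1 | rewrite exprS; exact: cop_mul]. Qed.

Lemma cop_Pe x B e : (forall m, (1 <= m < B)%N -> (0 < e m)%N -> cop x (Phi m)) ->
  cop x (Pe B e).
Proof.
move=> H; rewrite /Pe big_nat_cond; apply: (big_ind (cop x)); first exact: cop1.
  exact: cop_mul.
move=> i; rewrite andbT => Hi; case: (posnP (e i)) => [->|ei]; first exact: cop1.
by apply: cop_exp; apply: H.
Qed.

Definition Q N j := Pe N.+1 (fun m => ~~ (m %| j))%N.

Lemma unitQ N : (0 < N)%N -> exists c : nat -> {poly int},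
  \sum_(1 <= j < N.+1) c j * Q N j = 1.
Proof.
elim: N => [//|N IH] _.
case: (posnP N) => [->|N0].
  exists (fun _ => 1); rewrite big_nat1 mul1r /Q /Pe big_nat1 /=.
  by rewrite expr0.
have [c Hc] := IH N0.
have [a [b Hab]] : cop (Phi N.+1) (Q N.+1 N.+1).
  apply: cop_Pe => m /andP[m0 mN] nd.
  have mN' : (m < N.+1)%N.
    rewrite ltn_neqAle -ltnS mN andbT; apply/eqP => E; by move: nd; rewrite E dvdnn.
  by apply: cop_Phi; rewrite ?m0 ?mN' //; move: nd; case: (m %| N.+1)%N.
exists (fun j => if j == N.+1 then b else a * c j).
rewrite big_nat_recr //= eqxx.
rewrite (eq_big_nat _ _ (F2 := fun j => a * Phi N.+1 * (c j * Q N j))); last first.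
  move=> j /andP[j0 jN]; have /negbTE -> : j != N.+1 by rewrite neq_ltn jN.
  rewrite /Q Pe_recr.
  have -> : ~~ (N.+1 %| j)%N by apply/negP => /(dvdn_leq j0); rewrite leqNgt jN.
  by rewrite [X in _ ^+ X]/= expr1; ring.
by rewrite -big_distrr /= Hc mulr1.
Qed.

Lemma qv_neq0 : qv != 0.
Proof. by rewrite /qv tofrac_eq0 polyX_eq0. Qed.

Lemma laurent_tofrac p : laurent (tofrac p).
Proof. by exists p, 0%N; rewrite expr0 divr1. Qed.

Lemma laurent_mul x y : laurent x -> laurent y -> laurent (x * y).
Proof.
move=> [p [a ->]] [r [b ->]]; exists (p * r), (a + b)%N.
by rewrite mulf_div exprD rmorphM.
Qed.

Lemma laurent_add x y : laurent x -> laurent y -> laurent (x + y).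
Proof.
move=> [p [a ->]] [r [b ->]]; exists (p * 'X^b + r * 'X^a), (a + b)%N.
rewrite addf_div ?expf_neq0 ?qv_neq0 // exprD rmorphD !rmorphM !rmorphXn /=.
by [].
Qed.

Lemma laurent0 : laurent 0.
Proof. by rewrite -tofrac0; apply: laurent_tofrac. Qed.

Lemma laurent1 : laurent 1.
Proof. by rewrite -tofrac1; apply: laurent_tofrac. Qed.

Lemma qbr_nat a : qbr a%:Z = tofrac (br a).
Proof. by rewrite /qbr /br -exprnP rmorphB rmorphXn rmorph1. Qed.

Lemma pfact_S n : pfact n.+1 = pfact n * br n.+1.
Proof. by rewrite /pfact big_nat_recr. Qed.

Lemma qfact_pfact n : qfact n = tofrac (pfact n).
Proof.
rewrite /qfact /qbrn /pfact rmorph_prod /= -(big_mkord xpredT (fun j => qbr (n%:Z - j%:Z))).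
rewrite big_nat_rev /= big_add1 /=; apply: eq_big_nat => i /andP[_ ilt].
rewrite add0n subzn; last by lia.
by rewrite subKn // qbr_nat.
Qed.

Lemma f_pfact l k : f l k = tofrac (pfact (l - k) * pfact k).
Proof. by rewrite /f !qfact_pfact rmorphM. Qed.


Lemma in_I_add l x y : in_I l x -> in_I l y -> in_I l (x + y).
Proof.
move=> [c [Hc ->]] [d [Hd ->]]; exists (fun k => c k + d k); split.
  by move=> k; apply: laurent_add.
by rewrite -big_split; apply: eq_bigr => i _; rewrite mulrDl.
Qed.

Lemma in_I_scale l a x : laurent a -> in_I l x -> in_I l (a * x).
Proof.
move=> Ha [c [Hc ->]]; exists (fun k => a * c k); split.
  by move=> k; apply: laurent_mul.
rewrite big_distrr /=; apply: eq_bigr => i _; by rewrite mulrA.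
Qed.

Lemma in_I0 l : in_I l 0.
Proof.
exists (fun _ => 0); split; first by move=> _; exact: laurent0.
by rewrite big1 // => i _; rewrite mul0r.
Qed.

Lemma in_I_f l k : (k <= l)%N -> in_I l (f l k).
Proof.
move=> kl; exists (fun i => if i == k then 1 else 0); split.
  by move=> i; case: (i == k); [exact: laurent1 | exact: laurent0].
rewrite (bigD1 (Ordinal (kl : (k < l.+1)%N))) //= eqxx mul1r big1 ?addr0 //.
move=> i Hi; have /negbTE -> : (nat_of_ord i) != k.
  by apply: contra Hi => /eqP E; apply/eqP; apply: val_inj.
by rewrite mul0r.
Qed.

Lemma in_I_sum l n (F : nat -> Fq) : (forall i, (i < n)%N -> in_I l (F i)) ->
  in_I l (\sum_(i < n) F i).
Proof.
move=> H; elim: n H => [|n IH] H; first by rewrite big_ord0; exact: in_I0.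
rewrite big_ord_recr /=; apply: in_I_add; first by apply: IH => i Hi; apply: H; lia.
exact: H.
Qed.

Lemma in_I_step l x : in_I l x -> in_I l.+1 (x * tofrac (br l.+2)).
Proof.
move=> [c [Hc ->]]; rewrite big_distrl /=.
apply: (@in_I_sum _ _ (fun k => c k * f l k * tofrac (br l.+2))) => i il; rewrite -mulrA; apply: in_I_scale => //.
have E : f l i * tofrac (br l.+2) =
   qv ^+ (l.+1 - i) * f l.+1 i.+1 + f l.+1 i.
  rewrite !f_pfact /qv -rmorphXn -!rmorphM -rmorphD; congr tofrac.
  have -> : (l.+1 - i.+1 = l - i)%N by lia.
  have -> : (l.+1 - i = (l - i).+1)%N by lia.
  rewrite !pfact_S /br.
  have -> : (l.+2 = (l - i).+1 + i.+1)%N by lia.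
  rewrite exprD; ring.
rewrite E; apply: in_I_add; last by apply: in_I_f; lia.
apply: in_I_scale; first by rewrite /qv -rmorphXn; exact: laurent_tofrac.
by apply: in_I_f.
Qed.

Lemma pfact0 : pfact 0 = 1.
Proof. by rewrite /pfact big_geq. Qed.

Definition Eprod l j := \prod_(1 <= i < l.+2 | i != j) br i.

Lemma Eprod_rec l j : (j <= l.+1)%N -> Eprod l.+1 j = Eprod l j * br l.+2.
Proof.
move=> jl; rewrite /Eprod big_mkcond big_nat_recr //= -big_mkcond /=.
by have /negbTE -> : (l.+2 != j) by rewrite eq_sym neq_ltn ltnS jl.
Qed.

Lemma Eprod_last l : Eprod l l.+1 = pfact l.
Proof.
rewrite /Eprod big_mkcond big_nat_recr //= eqxx mulr1 /pfact.
apply: eq_big_nat => i /andP[_ il]; by have /negbTE -> : i != l.+1 by rewrite neq_ltn il.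
Qed.

Lemma inI_E l j : (1 <= j <= l.+1)%N -> in_I l (tofrac (Eprod l j)).
Proof.
elim: l j => [|l IH] j Hj.
  have -> : j = 1%N by lia.
  rewrite Eprod_last.
  have -> : tofrac (pfact 0) = f 0 0 by rewrite f_pfact pfact0 mulr1.
  exact: in_I_f.
case: (ltngtP j l.+2) => [jl|jl|->]; last 2 first.
- by lia.
- rewrite Eprod_last.
  have -> : tofrac (pfact l.+1) = f l.+1 0 by rewrite f_pfact pfact0 mulr1 subn0.
  exact: in_I_f.
rewrite Eprod_rec // rmorphM; apply: in_I_step; apply: IH; lia.
Qed.

Definition Plp l := Pe l.+2 (t l).

Lemma Pl_eq l : Pl l = tofrac (Plp l).
Proof.
rewrite /Plp Pe_recr.
have -> : t l l.+1 = 0%N by rewrite /t ltnn andbF.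
rewrite expr0 mulr1 /Pe /Pl rmorph_prod /=; apply: eq_bigr => i _.
by rewrite rmorphXn.
Qed.

Lemma t_le l k m : (k <= l)%N -> (1 <= m)%N -> (t l m <= (l - k) %/ m + k %/ m)%N.
Proof.
move=> kl m0; rewrite /t; case: ifP => // _.
rewrite leq_subLR -ltnS ltn_divLR // addnC.
have E1 := divn_eq (l - k) m; have E2 := divn_eq k m.
have r1 := ltn_pmod (l - k) m0; have r2 := ltn_pmod k m0.
nia.
Qed.

Lemma Pl_dvd l k : (k <= l)%N -> exists w, pfact (l - k) * pfact k = Plp l * w.
Proof.
move=> kl; rewrite (@pfact_Pe l.+2) ?(@pfact_Pe l.+2 k); try lia.
rewrite Pe_mul (@Pe_split l.+2 _ (t l)); first by eexists.
by move=> m /andP[m0 _]; apply: t_le.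
Qed.

Lemma Plp_Q l j : (1 <= j <= l.+1)%N -> Plp l * Q l.+1 j = Eprod l j.
Proof.
case/andP=> j0 jl; apply: (mulIf (br_neq0 j0)).
have -> : Eprod l j * br j = pfact l.+1.
  rewrite /pfact (bigD1_seq j) ?mem_index_iota ?j0 ?ltnS ?iota_uniq //= mulrC.
  by [].
rewrite (@Pe_br l.+2 j) ?j0 ?ltnS // /Plp /Q !Pe_mul (@pfact_Pe l.+2) //.
apply: eq_Pe => m /andP[m0 ml].
rewrite /t; case: (m %| j)%N; rewrite /= ?addn0 ?addn1; case: ifP => Hm.
- rewrite subn1 prednK // divn_gt0 //; lia.
- have -> : m = l.+1 by lia. by rewrite divnn.
- rewrite subn1 prednK // divn_gt0 //; lia.
- have -> : m = l.+1 by lia. by rewrite divnn.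
Qed.

Lemma in_I_sumn l m n (F : nat -> Fq) : (forall i, (m <= i < n)%N -> in_I l (F i)) ->
  in_I l (\sum_(m <= i < n) F i).
Proof.
move=> H; rewrite big_nat_cond; apply: (big_ind (in_I l)).
- exact: in_I0.
- exact: in_I_add.
- by move=> i; rewrite andbT; apply: H.
Qed.

Lemma Plp_inI l : in_I l (tofrac (Plp l)).
Proof.
have [c Hc] := unitQ (ltn0Sn l).
have -> : tofrac (Plp l) = \sum_(1 <= j < l.+2) tofrac (c j) * tofrac (Eprod l j).
  rewrite -(mulr1 (Plp l)) -Hc big_distrr rmorph_sum /=.
  apply: eq_big_nat => j Hj; rewrite -Plp_Q // -rmorphM; congr tofrac; ring.
apply: in_I_sumn => j Hj; apply: in_I_scale; first exact: laurent_tofrac.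
exact: inI_E.
Qed.

Lemma ldvd_add d x y : ldvd d x -> ldvd d y -> ldvd d (x + y).
Proof.
move=> [a [La ->]] [b [Lb ->]]; exists (a + b); split; first exact: laurent_add.
by rewrite mulrDr.
Qed.

Lemma inI_dvd l d x : (forall k, (k <= l)%N -> ldvd d (f l k)) -> in_I l x -> ldvd d x.
Proof.
move=> H [c [Hc ->]]; apply: (big_ind (ldvd d)).
- by exists 0; split; [exact: laurent0 | rewrite mulr0].
- exact: ldvd_add.
- move=> i _; have [w [Lw E]] := H i (ltn_ord i).
  exists (c i * w); split; first exact: laurent_mul.
  by rewrite E mulrCA.
Qed.

Lemma Pl_neq0 l : Pl l != 0.
Proof. by rewrite Pl_eq tofrac_eq0 Pe_neq0. Qed.

Lemma Pl_gcd l : is_gcd_f l (Pl l).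
Proof.
split; first by rewrite Pl_eq; exact: laurent_tofrac.
split.
  move=> k kl; have [w Hw] := Pl_dvd kl; exists (tofrac w); split; first exact: laurent_tofrac.
  by rewrite f_pfact Hw rmorphM Pl_eq.
move=> d Ld Hd; apply: (inI_dvd Hd); rewrite Pl_eq; exact: Plp_inI.
Qed.

Theorem theorem3p1 (l : nat) :
  (exists g, is_gcd_f l g) /\
  (forall g, is_gcd_f l g ->
     (forall x, laurent x -> (in_I l x <-> ldvd g x)) /\ assoc g (Pl l)).
Proof.
split; first by exists (Pl l); exact: Pl_gcd.
move=> g [Lg [Hdv Hgcd]].
have PI : in_I l (Pl l) by rewrite Pl_eq; exact: Plp_inI.
have [PL [PD _]] := Pl_gcd l.
have [c1 [L1 E1]] := Hgcd (Pl l) PL PD.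
have [c2 [L2 E2]] := inI_dvd Hdv PI.
split.
  move=> x _; split; first exact: inI_dvd.
  move=> [c [Lc ->]]; rewrite E1 -mulrA mulrC; apply: in_I_scale => //.
  exact: laurent_mul.
exists c1, c2; split => //; last by rewrite E1 mulrC.
apply/eqP; rewrite -subr_eq0; apply/eqP.
apply: (mulfI (Pl_neq0 l)); rewrite mulr0 mulrBr mulr1 mulrA -E1 -E2 subrr //.
Qed.
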